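(* Let $(\mathcal T(n))_{n\in\mathbb N}$ be the triangle Markov chain obtained by iterated random barycentric subdivision started from an arbitrary triangle, and let $(X_n,Y_n)$ be the characterizing point of $\mathcal T(n)$. Then almost surely the limit set $\bigcap_{p\in\mathbb N}\overline{\{X_n: n\ge p\}}$ of the sequence $(X_n)_{n\in\mathbb N}$ equals $[0,1/2]$.
   Context: A triangle is given by three points of the plane which are not all equal. Barycentric subdivision: if a triangle has vertices $A,B,C$, let $D,E,F$ be the midpoints of $[A,B],[B,C],[C,A]$ and $G$ its barycenter; the medians cut it into the six triangles $\{A,D,G\},\{D,B,G\},\{B,E,G\},\{E,C,G\},\{C,F,G\},\{F,A,G\}$. The triangle Markov chain: $\mathcal T(0)$ is given and $\mathcal T(n+1)$ is chosen uniformly among the six triangles of the barycentric subdivision of $\mathcal T(n)$, independently of the past. Characterizing point: there is a similitude mapping the triangle onto a triangle with vertices $(0,0)$, $(1,0)$, $(x,y)$, $0\le x\le1/2$, $y\ge0$, sending its longest edge onto $[(0,0),(1,0)]$ and its shortest edge onto $[(0,0),(x,y)]$; $(x,y)$ is unique and is the characterizing point. *)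

(* Defs.v *)
From HB Require Import structures.
From mathcomp Require Import all_boot all_order all_algebra.
From mathcomp Require Import all_classical all_reals all_analysis.
Set Implicit Arguments. Unset Strict Implicit. Unset Printing Implicit Defensive.
Import Order.TTheory GRing.Theory Num.Theory.
Import numFieldNormedType.Exports.
Local Open Scope classical_set_scope.
Local Open Scope ring_scope.

Section Tri.
Variable R : realType.

Definition point := (R * R)%type.

Definition sqdist (u v : point) : R := (u.1 - v.1) ^+ 2 + (u.2 - v.2) ^+ 2.

Definition midpoint (u v : point) : point := ((u.1 + v.1) / 2, (u.2 + v.2) / 2).

Definition barycenter (a b c : point) : point :=
  ((a.1 + b.1 + c.1) / 3, (a.2 + b.2 + c.2) / 3).

Definition triangle := (point * point * point)%type.

Definition tri_ok (t : triangle) : Prop :=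
  let: (a, b, c) := t in ~ (a = b /\ b = c).

Definition subtri (t : triangle) (k : nat) : triangle :=
  let: (a, b, c) := t in
  let d := midpoint a b in let e := midpoint b c in let f := midpoint c a in
  let g := barycenter a b c in
  match k with
  | 0 => (a, d, g) | 1 => (d, b, g) | 2 => (b, e, g)
  | 3 => (e, c, g) | 4 => (c, f, g) | _ => (f, a, g)
  end.

Fixpoint tri_chain (t0 : triangle) (xi : nat -> nat) (n : nat) : triangle :=
  match n with
  | 0 => t0
  | m.+1 => subtri (tri_chain t0 xi m) (xi m)
  end.

Definition similitude (f : point -> point) : Prop :=
  exists k : R, 0 < k /\ forall u v, sqdist (f u) (f v) = k ^+ 2 * sqdist u v.

(* (x,y) is the characterizing point of t: a similitude maps the triangle onto
   the triangle (0,0),(1,0),(x,y), 0 <= x <= 1/2, y >= 0, the longest edge [p,q]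
   going onto [(0,0),(1,0)] and the shortest edge [p,r] onto [(0,0),(x,y)]. *)
Definition is_char_point (t : triangle) (xy : point) : Prop :=
  let: (a, b, c) := t in
  0 <= xy.1 <= 2^-1 /\ 0 <= xy.2 /\
  exists p q r : point,
    perm_eq [:: p; q; r] [:: a; b; c] /\
    sqdist q r <= sqdist p q /\ sqdist p r <= sqdist p q /\
    sqdist p r <= sqdist q r /\
    exists f, similitude f /\ f p = (0, 0) /\ f q = (1, 0) /\ f r = xy.

Definition char_point (t : triangle) : point := xget (0, 0) (is_char_point t).

End Tri.

(* Main.v *)
Require Import Defs.
From HB Require Import structures.
From mathcomp Require Import all_boot all_order all_algebra.
From mathcomp Require Import all_classical all_reals all_analysis.
From mathcomp Require Import ring lra zify.
Import Order.TTheory GRing.Theory Num.Theory.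
Import numFieldNormedType.Exports.
Local Open Scope classical_set_scope.
Local Open Scope ring_scope.
Set Implicit Arguments. Unset Strict Implicit. Unset Printing Implicit Defensive.

Local Open Scope nat_scope.

Definition dig (c i : nat) : nat := (c %/ 6 ^ i) %% 6.

Lemma dig_lt c i : dig c i < 6.
Proof. exact: ltn_pmod. Qed.

Lemma dig0 c : dig c 0 = c %% 6.
Proof. by rewrite /dig expn0 divn1. Qed.

Lemma digS c i : dig c i.+1 = dig (c %/ 6) i.
Proof. by rewrite /dig expnS divnMA. Qed.

Lemma dig_inj M c c' : c < 6 ^ M -> c' < 6 ^ M ->
  (forall i, i < M -> dig c i = dig c' i) -> c = c'.
Proof.
elim: M c c' => [|M IH] c c'.
  by rewrite expn0 !ltnS !leqn0 => /eqP -> /eqP ->.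
move=> hc hc' H.
rewrite (divn_eq c 6) (divn_eq c' 6).
have -> : c %/ 6 = c' %/ 6.
  apply: IH; first by rewrite ltn_divLR // mulnC -expnS.
    by rewrite ltn_divLR // mulnC -expnS.
  by move=> i hi; rewrite -!digS; apply: H.
by have := H 0 isT; rewrite !dig0 => ->.
Qed.

Lemma dig_surj M (a : nat -> nat) : (forall i, i < M -> a i < 6) ->
  exists c, c < 6 ^ M /\ forall i, i < M -> dig c i = a i.
Proof.
elim: M a => [|M IH] a ha; first by exists 0; split.
have [c' [hc' H]] := IH (fun i => a i.+1) (fun i hi => ha i.+1 hi).
have a0 := ha 0 isT.
exists (a 0 + 6 * c'); split.
  rewrite expnS; have : c' <= 6 ^ M - 1 by lia.
  have : 0 < 6 ^ M by rewrite expn_gt0.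
  nia.
case=> [|i] hi.
  by rewrite dig0 addnC mulnC modnMDl modn_small.
rewrite digS (_ : (a 0 + 6 * c') %/ 6 = c'); first by apply: H.
by rewrite mulnC divnDMl // divn_small // add0n.
Qed.
Local Open Scope ring_scope.

Section Geo.
Variable R : realType.


Definition tL (t : triangle R) : R := let: (a, b, c) := t in sqdist a b.
Definition tS (t : triangle R) : R := let: (a, b, c) := t in sqdist a c.
Definition tI (t : triangle R) : R := let: (a, b, c) := t in
  (c.1 - a.1) * (b.1 - a.1) + (c.2 - a.2) * (b.2 - a.2).

Lemma sqdist_ge0 (a b : Defs.point R) : 0 <= sqdist a b.
Proof. by rewrite /sqdist; apply: addr_ge0; apply: sqr_ge0. Qed.

Lemma sqdistC (a b : Defs.point R) : sqdist a b = sqdist b a.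
Proof. rewrite /sqdist; ring. Qed.

Lemma sqdist_eq0 (a b : Defs.point R) : sqdist a b = 0 -> a = b.
Proof.
case: a b => [a1 a2] [b1 b2]; rewrite /sqdist /= => H.
have g1 := sqr_ge0 (a1 - b1); have g2 := sqr_ge0 (a2 - b2).
have h1 : (a1 - b1) ^+ 2 = 0 by lra.
have h2 : (a2 - b2) ^+ 2 = 0 by lra.
move/eqP: h1; rewrite sqrf_eq0 subr_eq0 => /eqP ->.
by move/eqP: h2; rewrite sqrf_eq0 subr_eq0 => /eqP ->.
Qed.

Lemma CS (t : triangle R) : tI t ^+ 2 <= tL t * tS t.
Proof.
case: t => [[[a1 a2] [b1 b2]] [c1 c2]]; rewrite /tI /tL /tS /sqdist /=.
have := sqr_ge0 ((c1 - a1) * (b2 - a2) - (c2 - a2) * (b1 - a1)).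
move=> h; rewrite -subr_ge0; apply: (le_trans h); rewrite le_eqVlt; apply/orP; left; apply/eqP; ring.
Qed.

Lemma tL_ge0 (t : triangle R) : 0 <= tL t.
Proof. by case: t => [[a b] c]; apply: sqdist_ge0. Qed.
Lemma tS_ge0 (t : triangle R) : 0 <= tS t.
Proof. by case: t => [[a b] c]; apply: sqdist_ge0. Qed.

Lemma child0 (t : triangle R) : [/\ tL (subtri t 0) = tL t / 4,
   tI (subtri t 0) = (tL t + tI t) / 6 &
   tS (subtri t 0) = (tL t + 2 * tI t + tS t) / 9].
Proof.
case: t => [[[a1 a2] [b1 b2]] [c1 c2]]; rewrite /tI /tL /tS /sqdist /midpoint /barycenter /=.
by by split; field.
Qed.

Lemma child1 (t : triangle R) : [/\ tL (subtri t 1) = tL t / 4,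
   tI (subtri t 1) = (2 * tI t - tL t) / 12 &
   tS (subtri t 1) = (4 * tS t - 4 * tI t + tL t) / 36].
Proof.
case: t => [[[a1 a2] [b1 b2]] [c1 c2]]; rewrite /tI /tL /tS /sqdist /midpoint /barycenter /=.
by split; field.
Qed.

Lemma child4 (t : triangle R) : [/\ tL (subtri t 4) = tS t / 4 &
   9 * tS (subtri t 4) = tL t - 4 * tI t + 4 * tS t ].
Proof.
case: t => [[[a1 a2] [b1 b2]] [c1 c2]]; rewrite /tI /tL /tS /sqdist /midpoint /barycenter /=.
by split; field.
Qed.

Lemma subtri_ok (t : triangle R) k : tri_ok t -> tri_ok (subtri t k).
Proof.
case: t => [[[a1 a2] [b1 b2]] [c1 c2]] /= H.
case: k => [|[|[|[|[|k]]]]] /=;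
rewrite /midpoint /barycenter /= => -[[E1 E2] [E3 E4]]; apply: H;
(split; congr pair; lra).
Qed.


Definition run (t : triangle R) (s : seq nat) := foldl (@subtri R) t s.
Definition uu (t : triangle R) := tI t / tL t.
Definition rr (t : triangle R) := tS t / tL t.

Lemma child0_ur (t : triangle R) : 0 < tL t ->
  [/\ 0 < tL (subtri t 0), uu (subtri t 0) = 2 * (1 + uu t) / 3 &
      rr (subtri t 0) = 4 * (1 + 2 * uu t + rr t) / 9].
Proof.
move=> L0; have [e1 e2 e3] := child0 t; rewrite /uu /rr e1 e2 e3.
have L0' : tL t != 0 by rewrite gt_eqF.
split; [lra | field | field]; by [].
Qed.

Lemma child1_ur (t : triangle R) : 0 < tL t ->
  [/\ 0 < tL (subtri t 1), uu (subtri t 1) = (2 * uu t - 1) / 3 &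
      rr (subtri t 1) = (4 * rr t - 4 * uu t + 1) / 9].
Proof.
move=> L0; have [e1 e2 e3] := child1 t; rewrite /uu /rr e1 e2 e3.
have L0' : tL t != 0 by rewrite gt_eqF.
split; [lra | field | field]; by [].
Qed.

Lemma steer (n : nat) (x : R) : -1 <= x <= 2 ->
  exists s : seq nat, [/\ size s = n, all (fun k => k < 6)%N s &
    exists x', -1 <= x' <= 2 /\ forall t, 0 < tL t ->
      [/\ 0 < tL (run t s), uu (run t s) - x = (2/3) ^+ n * (uu t - x') &
          rr (run t s) - uu (run t s) ^+ 2 = (4/9) ^+ n * (rr t - uu t ^+ 2)]].
Proof.
elim: n x => [|n IH] x hx.
  exists [::]; split => //; exists x; split => // t L0.
  by rewrite /run /= !expr0 !mul1r.
have [x0|x0] := lerP 0 x.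
  have hx1 : -1 <= 3 * x / 2 - 1 <= 2 by lra.
  have [s [sz al [x' [hx' H]]]] := IH _ hx1.
  exists (rcons s 0%N); split; first by rewrite size_rcons sz.
    by rewrite all_rcons al.
  exists x'; split => // t L0; have [L1 E1 E2] := H t L0.
  rewrite /run foldl_rcons -/(run t s).
  have [L2 F1 F2] := child0_ur L1; split => //.
    rewrite F1 !exprS; set u := uu (run t s) in E1 *.
    have -> : 2 * (1 + u) / 3 - x = 2/3 * (u - (3 * x / 2 - 1)) by field.
    by rewrite E1 mulrA.
  by rewrite F2 F1 [(4/9) ^+ n.+1]exprS -[4 / 9 * _ * _]mulrA -E2; field.
have hx1 : -1 <= (3 * x + 1) / 2 <= 2.
  move: hx x0 => /andP[h1 h2] h3; apply/andP; split; lra.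
have [s [sz al [x' [hx' H]]]] := IH _ hx1.
exists (rcons s 1%N); split; first by rewrite size_rcons sz.
  by rewrite all_rcons al.
exists x'; split => // t L0; have [L1 E1 E2] := H t L0.
rewrite /run foldl_rcons -/(run t s).
have [L2 F1 F2] := child1_ur L1; split => //.
  rewrite F1 !exprS; set u := uu (run t s) in E1 *.
  have -> : (2 * u - 1) / 3 - x = 2/3 * (u - (3 * x + 1) / 2) by field.
  by rewrite E1 mulrA.
by rewrite F2 F1 [(4/9) ^+ n.+1]exprS -[4 / 9 * _ * _]mulrA -E2; field.
Qed.


Lemma sqdist0 (a : Defs.point R) : sqdist a a = 0.
Proof. by rewrite /sqdist !subrr expr0n /= addr0. Qed.

Lemma sqdist_diff (a b c : Defs.point R) :
  sqdist a c - sqdist b c = 2 * tI (a, b, c) - tL (a, b, c).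
Proof.
case: a => a1 a2; case: b => b1 b2; case: c => c1 c2.
rewrite /tI /tL /sqdist /=; ring.
Qed.

Lemma char_x (a b c : Defs.point R) xy :
  sqdist b c < sqdist a b -> sqdist a c < sqdist b c ->
  is_char_point (a, b, c) xy -> xy.1 = tI (a, b, c) / tL (a, b, c).
Proof.
move=> h1 h2 [_ [_ [p [q [r [Hp [ho1 [ho2 [ho3 [f [Hf [fp [fq fr]]]]]]]]]]]]].
case: Hf => k [k0 Hk].
have g1 := sqdist_ge0 a c.
have nab : a != b.
  by apply/eqP => E; move: h1; rewrite E sqdist0; move: (sqdist_ge0 b c) => ? ?; lra.
have nbc : b != c.
  by apply/eqP => E; move: h2; rewrite E sqdist0 => ?; lra.
have nac : a != c.
  by apply/eqP => E; move: h1; rewrite E sqdistC => ?; lra.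
have U : uniq [:: p; q; r] by rewrite (perm_uniq Hp) /= !inE negb_or nab nac nbc.
have Hpm := perm_mem Hp.
have e1 := sqdistC a b; have e2 := sqdistC b c; have e3 := sqdistC a c.
have : p \in [:: a; b; c] by rewrite -(Hpm p) inE eqxx.
have : q \in [:: a; b; c] by rewrite -(Hpm q) !inE eqxx orbT.
have : r \in [:: a; b; c] by rewrite -(Hpm r) !inE eqxx !orbT.
rewrite !inE => /or3P[/eqP Er|/eqP Er|/eqP Er] /or3P[/eqP Eq|/eqP Eq|/eqP Eq]
  /or3P[/eqP Ep|/eqP Ep|/eqP Ep]; subst p q r;
  rewrite /= ?inE ?eqxx ?orbT ?andbF in U => //; try lra.
have E1 := Hk a b; have E2 := Hk a c; have E3 := Hk b c.
rewrite fp fq fr in E1 E2 E3.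
have D := sqdist_diff a b c.
have D2 : sqdist (0, 0) xy - sqdist (1, 0) xy = 2 * xy.1 - 1.
  by case: xy {fr E2 E3} => x y; rewrite /sqdist /=; ring.
have F1 : 1 = k ^+ 2 * tL (a, b, c) by rewrite -E1 /sqdist /=; ring.
have F2 : 2 * xy.1 - 1 = k ^+ 2 * (2 * tI (a, b, c) - tL (a, b, c)).
  by rewrite -D2 E2 E3 -D mulrBr.
have hL : tL (a, b, c) != 0 by rewrite /tL; move: (sqdist_ge0 b c) => ?; apply/eqP => ?; lra.
move: F1 F2; move: (k ^+ 2) (tI (a, b, c)) (tL (a, b, c)) hL => K I L hL F1 F2.
have EK : K = L^-1 by apply: (mulIf hL); rewrite mulVf // -F1.
move: F2; rewrite EK mulrBr mulVf // => F2.
have -> : xy.1 = (L^-1 * (2 * I)) / 2 by lra.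
field; by [].
Qed.


Lemma char_exists (a b c : Defs.point R) :
  sqdist b c < sqdist a b -> sqdist a c < sqdist b c ->
  exists xy, is_char_point (a, b, c) xy.
Proof.
move=> h1 h2.
have D := sqdist_diff a b c.
have gS := sqdist_ge0 a c.
have eL : tL (a, b, c) = sqdist a b by [].
have hL : 0 < tL (a, b, c) by rewrite eL; move: (sqdist_ge0 b c) => ?; lra.
have hI : 0 < tI (a, b, c) by rewrite eL in D hL; lra.
have hI2 : 2 * tI (a, b, c) < tL (a, b, c) by rewrite eL in D hL *; lra.
have Lne : tL (a, b, c) != 0 by rewrite gt_eqF.
pose L := tL (a, b, c).
pose cr := (b.1 - a.1) * (c.2 - a.2) - (b.2 - a.2) * (c.1 - a.1).
pose sg : R := if 0 <= cr then 1 else -1.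
have sg2 : sg ^+ 2 = 1 by rewrite /sg; case: ifP => _; rewrite ?sqrrN expr1n.
pose f (z : Defs.point R) : Defs.point R :=
  (((z.1 - a.1) * (b.1 - a.1) + (z.2 - a.2) * (b.2 - a.2)) / L,
   sg * ((b.1 - a.1) * (z.2 - a.2) - (b.2 - a.2) * (z.1 - a.1)) / L).
exists (f c); split.
  rewrite /= -/(tI (a, b, c)) -/L; apply/andP; split.
    by apply: divr_ge0; apply: ltW.
  rewrite ler_pdivrMr // /L; lra.
split.
  rewrite /= -/cr /sg; case: ifP => h; apply: divr_ge0; try exact: ltW.
    by rewrite mul1r.
  by rewrite mulN1r oppr_ge0; apply: ltW; rewrite ltNge h.
exists a, b, c; split; first exact: perm_refl.
split; first exact: ltW.
split; first exact: (ltW (lt_trans h2 h1)).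
split; first exact: ltW.
exists f; split; last split; last split => //.
- exists (Num.sqrt L^-1); split; first by rewrite sqrtr_gt0 invr_gt0.
  move=> u v; rewrite sqr_sqrtr; last by rewrite invr_ge0 ltW.
  move: Lne; rewrite /f /L /tL /sg /cr /sqdist /=.
  case: u => u1 u2; case: v => v1 v2; case: a {sg2 f sg cr L D hL hI hI2 h1 h2 gS eL} => a1 a2;
  case: b => b1 b2 /= Lne.
  by case: ifP => _; field.
- by rewrite /f /= !subrr !mul0r !mulr0 subrr add0r mulr0 !mul0r.
- rewrite /f /=; congr pair.
    rewrite -(mulfV Lne) /L /tL /sqdist /=; congr (_ / _); ring.
  rewrite [X in sg * X](_ : _ = 0); first by rewrite mulr0 mul0r.
  ring.
Qed.

Lemma char_val (t : triangle R) : 0 < tL t -> uu t < 1/2 -> rr t < 2 * uu t ->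
  (char_point t).1 = uu t.
Proof.
case: t => [[a b] c] L0 h1 h2.
have D := sqdist_diff a b c.
move: h1 h2; rewrite /uu /rr (ltr_pdivrMr _ _ L0) (ltr_pdivrMr _ _ L0) mulrA.
rewrite divfK ?gt_eqF // => h1 h2.
have eL : tL (a, b, c) = sqdist a b by [].
have eS : tS (a, b, c) = sqdist a c by [].
have k1 : sqdist b c < sqdist a b by rewrite -eL; lra.
have k2 : sqdist a c < sqdist b c by rewrite -eS; lra.
rewrite /char_point; apply: char_x => //.
exact: xgetPex (char_exists k1 k2).
Qed.


Lemma tri_ok_LS (t : triangle R) : tri_ok t -> 0 < tL t + tS t.
Proof.
case: t => [[a b] c] /= H.
have g1 := sqdist_ge0 a b; have g2 := sqdist_ge0 a c.
rewrite /tL /tS /=; rewrite lt_neqAle addr_ge0 // andbT eq_sym; apply/eqP => E.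
have E1 : sqdist a b = 0 by lra.
have E2 : sqdist a c = 0 by lra.
apply: H; split; first exact: sqdist_eq0.
by rewrite -(sqdist_eq0 E1); exact: sqdist_eq0.
Qed.

Lemma prestep (t : triangle R) : tri_ok t -> exists l : nat,
  [/\ (l < 6)%N, 0 < tL (subtri t l) & tS (subtri t l) <= 4 * tL (subtri t l)].
Proof.
move=> ok; have LS := tri_ok_LS ok; have cs := CS t.
have gL := tL_ge0 t; have gS := tS_ge0 t.
have [h|h] := lerP (tS t) (tL t).
  exists 0%N; have [e1 e2 e3] := child0 t; rewrite e1 e3; split => //.
    lra.
  have hI : tI t <= tL t by nra.
  lra.
exists 4%N; have [e1 e2] := child4 t; rewrite e1; split => //.
  lra.
have hI : - tI t <= tS t by nra.
lra.
Qed.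

Lemma pow_small (q : R) (m : nat) : 0 <= q <= 1 -> (1 - q) ^+ m * (1 + m%:R * q) <= 1.
Proof.
move=> /andP[q0 q1]; elim: m => [|m IH]; first by rewrite expr0 mul0r addr0 mul1r.
rewrite exprS -mulrA; apply: (le_trans _ IH).
have p0 : 0 <= (1 - q) ^+ m by apply: exprn_ge0; lra.
rewrite mulrCA; apply: ler_wpM2l => //.
rewrite -natr1; have m0 : 0 <= (m%:R : R) by [].
have : 0 <= q * q * (1 + m%:R) by apply: mulr_ge0; [apply: mulr_ge0| lra].
nra.
Qed.

Lemma exists_small (e : R) : 0 < e -> exists n : nat, 4 * (2/3) ^+ n < e.
Proof.
move=> e0; have b0 : 0 <= 12 / e by apply: divr_ge0 => //; apply: ltW.
have hb := archi_boundP b0; set n := Num.Def.archi_bound _ in hb.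
exists n; have := @pow_small (1/3) n.
have -> : 1 - 1/3 = (2/3 : R) by field.
have q01 : 0 <= (1/3 : R) <= 1 by apply/andP; split; lra.
move=> /(_ q01) h.
have p0 : 0 <= (2/3 : R) ^+ n by apply: exprn_ge0; lra.
move: hb; rewrite ltr_pdivrMr // => hb.
have m0 : 0 <= (n%:R : R) by [].
nra.
Qed.

Lemma final_ineq (x0 eta u D : R) : 0 < x0 -> x0 < 1/2 -> 0 < eta -> eta <= x0/2 ->
  eta <= (1/2 - x0)/2 -> `|u - x0| < eta -> 0 <= D -> D < eta ->
  u < 1/2 /\ u ^+ 2 + D < 2 * u.
Proof.
move=> h1 h2 h3 h4 h5; rewrite ltr_norml => /andP[h6 h7] h8 h9.
split; first lra.
have u0 : 0 < u by lra.
have uh : u < 1/2 by lra.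
nra.
Qed.


Lemma reach (x0 eps : R) : 0 < x0 -> x0 < 1/2 -> 0 < eps ->
  exists N : nat, forall t : triangle R, tri_ok t ->
    exists s : seq nat, [/\ size s = N, all (fun k => k < 6)%N s &
      `|(char_point (run t s)).1 - x0| < eps].
Proof.
move=> x00 x01 e0.
pose eta := Num.min eps (Num.min (x0 / 2) ((1/2 - x0) / 2)).
have := le_refl eta; rewrite {2}/eta !le_min => /and3P[he1 he2 he3].
have eta0 : 0 < eta by rewrite /eta !lt_min e0 /=; apply/andP; split; lra.
have [n hn] := exists_small eta0.
have hx : -1 <= x0 <= 2 by apply/andP; split; lra.
have [s1 [sz al [x' [hx' H]]]] := steer n hx.
exists n.+1 => t ok.
have [l [l6 L1 S1]] := prestep ok.
exists (l :: s1); split => //=; first by rewrite sz.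
  by rewrite l6 al.
rewrite /run /= -/(run _ s1).
set t1 := subtri t l in L1 S1 *.
have [L2 E1 E2] := H t1 L1.
have p0 : 0 <= (2/3 : R) ^+ n by apply: exprn_ge0; lra.
have p1 : (2/3 : R) ^+ n <= 1 by apply: exprn_ile1; lra.
have r1 : rr t1 <= 4 by rewrite /rr ler_pdivrMr.
have cs : uu t1 ^+ 2 <= rr t1.
  rewrite /uu /rr expr_div_n ler_pdivrMr ?exprn_gt0 // expr2 mulrA divfK ?gt_eqF //.
  by rewrite [tS t1 * _]mulrC -expr2; exact: CS.
have u1 : `|uu t1 - x'| <= 4.
  move: hx' => /andP[? ?]; rewrite ler_norml; apply/andP; split; nra.
have hu : `|uu (run t1 s1) - x0| < eta.
  rewrite E1 normrM ger0_norm //; apply: le_lt_trans hn.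
  by rewrite mulrC ler_wpM2r.
have e49 : (4/9 : R) ^+ n = (2/3) ^+ n * (2/3) ^+ n.
  by rewrite -exprMn; congr (_ ^+ _); field.
have hD0 : 0 <= rr (run t1 s1) - uu (run t1 s1) ^+ 2.
  rewrite E2 e49; apply: mulr_ge0; [apply: mulr_ge0 => // | lra].
have hD : rr (run t1 s1) - uu (run t1 s1) ^+ 2 < eta.
  rewrite E2 e49; apply: le_lt_trans hn.
  have : 0 <= rr t1 - uu t1 ^+ 2 by lra.
  nra.
have [k1 k2] := final_ineq x00 x01 eta0 he2 he3 hu hD0 hD.
rewrite char_val //; last by lra.
exact: lt_le_trans hu he1.
Qed.

End Geo.

Section Chain.
Variable R : realType.

Lemma chain_ext (T0 : triangle R) (k k' : nat -> nat) n :
  (forall i, (i < n)%N -> k i = k' i) -> tri_chain T0 k n = tri_chain T0 k' n.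
Proof.
elim: n => [|n IH] H //=.
rewrite IH; last by move=> i hi; apply: H; apply: ltnW.
by rewrite H.
Qed.

Lemma chain_add (T0 : triangle R) (k : nat -> nat) p j :
  tri_chain T0 k (p + j) = run (tri_chain T0 k p) [seq k (p + i) | i <- iota 0 j].
Proof.
elim: j => [|j IH]; first by rewrite addn0.
rewrite addnS; change (tri_chain T0 k (p + j).+1) with (subtri (tri_chain T0 k (p + j)) (k (p + j)%N)).
by rewrite IH -(addn1 j) iotaD map_cat /run foldl_cat /= add0n.
Qed.

Lemma chain_ok (T0 : triangle R) k n : tri_ok T0 -> tri_ok (tri_chain T0 k n).
Proof. by move=> ok; elim: n => //= n IH; apply: subtri_ok. Qed.

End Chain.

Lemma sum_le_const (R : realType) n (g : nat -> R) B :
  (forall c, g c <= B) -> \sum_(c < n) g c <= n%:R * B.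
Proof.
move=> hB; elim: n => [|n IH]; first by rewrite big_ord0 mul0r.
by rewrite big_ord_recr /= -natr1 mulrDl mul1r lerD.
Qed.

Lemma sum_bound (R : realType) n (g : nat -> R) B c0 :
  (c0 < n)%N -> g c0 = 0 -> (forall c, g c <= B) ->
  \sum_(c < n) g c <= (n.-1)%:R * B.
Proof.
move=> hc g0 hB; elim: n hc => [//|n IH] hc.
rewrite big_ord_recr /=.
have [e|ne] := eqVneq c0 n.
  by rewrite -e g0 addr0 e; apply: sum_le_const.
have hc' : (c0 < n)%N by rewrite ltnS leq_eqVlt (negbTE ne) in hc.
apply: le_trans (lerD (IH hc') (hB n)) _.
case: n {IH ne} hc' hc => [//|n] _ _ /=.
by rewrite -natr1 mulrDl mul1r.
Qed.

Lemma pow_lt (R : realType) (q e : R) : 0 < q -> q <= 1 -> 0 < e ->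
  exists m : nat, (1 - q) ^+ m < e.
Proof.
move=> q0 q1 e0.
have b0 : 0 <= (e * q)^-1 by rewrite invr_ge0; apply: ltW; apply: mulr_gt0.
have hb := archi_boundP b0; set n := Num.Def.archi_bound _ in hb.
exists n; have := @pow_small R q n.
have q01 : 0 <= q <= 1 by apply/andP; split => //; apply: ltW.
move=> /(_ q01) h.
have p0 : 0 <= (1 - q) ^+ n by apply: exprn_ge0; lra.
have eq0 : 0 < e * q by apply: mulr_gt0.
have m0 : 0 <= (n%:R : R) by [].
have : 1 < n%:R * (e * q) by rewrite -ltr_pdivrMr // div1r.
nra.
Qed.

Section Prob.
Context (R : realType) (d : measure_display) (Omega : measurableType d)
  (P : probability Omega R) (xi : nat -> Omega -> nat) (T0 : triangle R).
Hypothesis ok0 : tri_ok T0.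
Hypothesis mxi : forall n k, measurable [set w | xi n w = k].
Hypothesis Pcyl : forall (n : nat) (k : nat -> nat), (forall i, (i <= n)%N -> (k i < 6)%N) ->
     P [set w | forall i, (i <= n)%N -> xi i w = k i] = ((6^-1 : R) ^+ n.+1)%:E.

Definition cyl n (k : nat -> nat) := [set w | forall i, (i < n)%N -> xi i w = k i].
Definition valid n (k : nat -> nat) := forall i, (i < n)%N -> (k i < 6)%N.

Lemma cyl0 k : cyl 0 k = setT.
Proof. by apply/seteqP; split => w // _ i. Qed.

Lemma cyl_meas n k : measurable (cyl n k).
Proof.
elim: n => [|n IH]; first by rewrite cyl0; exact: measurableT.
have -> : cyl n.+1 k = cyl n k `&` [set w | xi n w = k n].
  apply/seteqP; split => w /=.
    by move=> H; split; [move=> i hi; apply: H; exact: ltnW | apply: H].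
  by move=> [H1 H2] i; rewrite ltnS leq_eqVlt => /orP[/eqP -> //|]; exact: H1.
exact: measurableI.
Qed.

Lemma cyl_prob n k : valid n k -> (P : {content set Omega -> \bar R}) (cyl n k) = ((6^-1 : R) ^+ n)%:E.
Proof.
case: n => [|n] v; first by rewrite cyl0 expr0; exact: (probability_setT P).
exact: (Pcyl v).
Qed.

Definition ext p (k : nat -> nat) (c : nat) := fun i => if (i < p)%N then k i else dig c (i - p).

Lemma ext_lt p k c i : (i < p)%N -> ext p k c i = k i.
Proof. by rewrite /ext => ->. Qed.

Lemma ext_ge p k c i : ext p k c (p + i) = dig c i.
Proof. by rewrite /ext ltnNge leq_addr /= addKn. Qed.

Lemma ext_valid p M k c : valid p k -> valid (p + M) (ext p k c).
Proof. by move=> v i hi; rewrite /ext; case: ifP => h; [exact: v | exact: dig_lt]. Qed.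

Definition U p M k := \big[setU/set0]_(c < 6 ^ M) cyl (p + M) (ext p k c).

Lemma U_meas p M k : measurable (U p M k).
Proof. by apply: bigsetU_measurable => c _; exact: cyl_meas. Qed.

Lemma U_mem p M k w : U p M k w <-> exists2 c, (c < 6 ^ M)%N & cyl (p + M) (ext p k c) w.
Proof.
rewrite /U -(bigcup_mkord _ (fun c => cyl (p + M) (ext p k c))); split; first by move=> [c hc Hw]; exists c.
by move=> [c hc Hw]; exists c.
Qed.

Lemma U_sub p M k : U p M k `<=` cyl p k.
Proof.
move=> w /U_mem [c _ Hw] i hi; rewrite Hw ?ext_lt //.
exact: leq_trans hi (leq_addr _ _).
Qed.


Lemma U_prob p M k : valid p k -> (P : {content set Omega -> \bar R}) (U p M k) = ((6^-1 : R) ^+ p)%:E.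
Proof.
move=> v.
pose F c := if (c < 6 ^ M)%N then cyl (p + M) (ext p k c) else set0.
have mF c : measurable (F c) by rewrite /F; case: ifP => _ //; exact: cyl_meas.
have tF : trivIset setT F.
  move=> c c' _ _ [w []]; rewrite /F.
  case: ifP => hc; last by [].
  case: ifP => hc'; last by [].
  move=> H1 H2; apply: (dig_inj hc hc') => i hi.
  have hpi : (p + i < p + M)%N by rewrite ltn_add2l.
  by rewrite -(ext_ge p k c) -(ext_ge p k c') -H1 // -H2.
have -> : U p M k = \big[setU/set0]_(c < 6 ^ M) F c.
  by apply: eq_bigr => c _; rewrite /F ltn_ord.
rewrite measure_bigsetU //.
rewrite (eq_bigr (fun _ => ((6^-1 : R) ^+ (p + M))%:E)); last first.
  by move=> c _; rewrite /F ltn_ord; apply: cyl_prob; exact: ext_valid.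
rewrite sumEFin sumr_const card_ord; congr (_%:E).
by rewrite exprD -[_ *+ (6 ^ M)]mulr_natr natrX -mulrA -exprMn mulVf // expr1n mulr1.
Qed.

Lemma U_null p M k : valid p k -> (P : {content set Omega -> \bar R}) (cyl p k `\` U p M k) = 0.
Proof.
move=> v; rewrite measureD; [|exact: cyl_meas|exact: U_meas|by rewrite cyl_prob // ltry].
rewrite setIidr; last exact: U_sub.
by rewrite cyl_prob // U_prob // subee.
Qed.


Variables (x0 eps : R) (N : nat).
Hypothesis hreach : forall t : triangle R, tri_ok t ->
    exists s : seq nat, [/\ size s = N, all (fun k => k < 6)%N s &
      `|(char_point (run t s)).1 - x0| < eps].

Definition Xs (k : nat -> nat) n := (char_point (tri_chain T0 k n)).1.
Definition Bad p := [set w | forall n, (p <= n)%N -> eps <= `|Xs (fun m => xi m w) n - x0|].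

Lemma Bad_mono p q : (p <= q)%N -> Bad p `<=` Bad q.
Proof. by move=> pq w H n qn; apply: H; exact: leq_trans qn. Qed.

Lemma good_exists p k : valid p k ->
  exists2 c, (c < 6 ^ N)%N & `|Xs (ext p k c) (p + N) - x0| < eps.
Proof.
move=> v.
have [s [sz al hs]] := hreach (chain_ok k p ok0).
have [c [hc Hc]] : exists c, (c < 6 ^ N)%N /\ forall i, (i < N)%N -> dig c i = nth 0%N s i.
  apply: dig_surj => i hi; rewrite -sz in hi.
  by move/all_nthP: al => /(_ 0%N i hi).
exists c => //.
rewrite /Xs chain_add (@chain_ext R T0 _ k p); last by move=> i hi; rewrite ext_lt.
suff -> : [seq ext p k c (p + i) | i <- iota 0 N] = s by [].
rewrite -(mkseq_nth 0%N s) sz /mkseq; apply/eq_in_map => i.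
by rewrite mem_iota add0n => hi; rewrite ext_ge Hc.
Qed.


Lemma claim m : forall p k, valid p k -> exists V, [/\ measurable V,
  cyl p k `&` Bad p `<=` V &
  ((P : {content set Omega -> \bar R}) V <= ((6^-1 : R) ^+ p * (1 - (6^-1) ^+ N) ^+ m)%:E)%E].
Proof.
elim: m => [|m IH] p k v.
  exists (cyl p k); split; first exact: cyl_meas.
    by move=> w [].
  by rewrite cyl_prob // expr0 mulr1.
have vc c : valid (p + N) (ext p k c) by apply: ext_valid.
have IHc c := IH (p + N) (ext p k c) (vc c).
pose Vc c := sval (cid (IHc c)).
have HV c := svalP (cid (IHc c)).
pose good c := `|Xs (ext p k c) (p + N) - x0| < eps.
pose W c := if (c < 6 ^ N)%N && ~~ good c then Vc c else set0.
have mW c : measurable (W c).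
  by rewrite /W; case: ifP => _; [have [] := HV c | exact: measurable0].
pose B := (6^-1 : R) ^+ (p + N) * (1 - (6^-1) ^+ N) ^+ m.
have q01 : 0 <= (6^-1 : R) ^+ N <= 1.
  have h6a : 0 <= (6^-1 : R) by rewrite invr_ge0.
  have h6b : (6^-1 : R) <= 1 by rewrite invf_le1 // ler1n.
  by apply/andP; split; [apply: exprn_ge0 | apply: exprn_ile1].
have B0 : 0 <= B.
  apply: mulr_ge0; apply: exprn_ge0; first by rewrite invr_ge0.
  by move: q01 => /andP[_ ?]; lra.
have mU := U_meas p N k.
have mBU : measurable (\big[setU/set0]_(c < 6 ^ N) W c).
  by apply: bigsetU_measurable => c _.
exists ((cyl p k `\` U p N k) `|` \big[setU/set0]_(c < 6 ^ N) W c); split.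
- apply: measurableU => //; apply: measurableD => //; exact: cyl_meas.
- move=> w [wc wB].
  have [hU|hU] := pselect (U p N k w); last by left.
  right; have [c hc Hw] := (U_mem _ _ _ _).1 hU.
  rewrite -(bigcup_mkord _ W); exists c => //.
  have hg : ~~ good c.
    rewrite /good -leNgt.
    have -> : Xs (ext p k c) (p + N) = Xs (fun m => xi m w) (p + N).
      by rewrite /Xs (@chain_ext R T0 _ (fun m => xi m w) (p + N)) // => i hi; rewrite Hw.
    exact: wB (leq_addr _ _).
  rewrite /W hc hg /=; have [_ sub _] := HV c; apply: sub; split => //.
  exact: Bad_mono (leq_addr _ _) _ wB.
- apply: le_trans (measureU2 _ _ _) _.
  + by apply: measurableD => //; exact: cyl_meas.
  + exact: mBU.
  rewrite U_null // add0e.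
  have hs := @content_subadditive d R Omega P _ W (6 ^ N)%N (fun c _ => mW c) mBU (@subset_refl _ _).
  apply: le_trans hs _.
  pose g c := if good c then 0 else B.
  have hWc c : ((P : {content set Omega -> \bar R}) (W c) <= (g c)%:E)%E.
    rewrite /W /g; case: ifP => hc; last first.
      by rewrite measure0 lee_fin; case: ifP.
    move/andP: hc => [_ /negbTE ->]; have [_ _ h] := HV c; exact: h.
  have hs2 : (\sum_(c < 6 ^ N) (P : {content set Omega -> \bar R}) (W c) <=
      \sum_(c < 6 ^ N) (g c)%:E)%E by apply: lee_sum => c _; exact: hWc.
  apply: (le_trans hs2).
  rewrite sumEFin lee_fin.
  have [c0 hc0 hg0] := good_exists v.
  apply: le_trans (sum_bound hc0 _ (B := B) _) _.
  + by rewrite /g /good hg0.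
  + by move=> c; rewrite /g; case: ifP.
  rewrite le_eqVlt; apply/orP; left; apply/eqP.
  have hN : (0 < 6 ^ N)%N by rewrite expn_gt0.
  rewrite -subn1 natrB // /B exprD exprS.
  have h6 : ((6 ^ N)%:R : R) * (6^-1) ^+ N = 1.
    by rewrite natrX -exprMn mulfV // expr1n.
  move: h6; move: ((6 ^ N)%:R : R) ((6^-1 : R) ^+ N) => X q h6.
  have -> : (X - 1%:R) * ((6^-1) ^+ p * q * (1 - q) ^+ m) =
            (6^-1) ^+ p * ((X * q - q) * (1 - q) ^+ m) by ring.
  by rewrite h6.
Qed.


Lemma bad_bound p m : exists W, [/\ measurable W, Bad p `<=` W &
  ((P : {content set Omega -> \bar R}) W <= ((1 - (6^-1 : R) ^+ N) ^+ m)%:E)%E].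
Proof.
pose k0 := fun _ : nat => 0%N.
have v0 : valid 0 k0 by [].
have vc c : valid (0 + p) (ext 0 k0 c) by apply: ext_valid.
have IHc c := claim m (vc c).
pose Vc c := sval (cid (IHc c)).
have HV c := svalP (cid (IHc c)).
have mV c : measurable (Vc c) by have [] := HV c.
have mU := U_meas 0 p k0.
have mBU : measurable (\big[setU/set0]_(c < 6 ^ p) Vc c).
  by apply: bigsetU_measurable => c _.
have mC : measurable (cyl 0 k0 `\` U 0 p k0) by apply: measurableD => //; exact: cyl_meas.
exists ((cyl 0 k0 `\` U 0 p k0) `|` \big[setU/set0]_(c < 6 ^ p) Vc c); split.
- exact: measurableU.
- move=> w wB.
  have [hU|hU] := pselect (U 0 p k0 w); last by left; split => //; rewrite cyl0.
  right; have [c hc Hw] := (U_mem _ _ _ _).1 hU.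
  rewrite -(bigcup_mkord _ Vc); exists c => //.
  have [_ sub _] := HV c; apply: sub; split => //.
- apply: le_trans (measureU2 _ _ _) _ => //.
  rewrite U_null // add0e.
  have hs := @content_subadditive d R Omega P _ Vc (6 ^ p)%N (fun c _ => mV c) mBU (@subset_refl _ _).
  apply: le_trans hs _.
  have hs2 : (\sum_(c < 6 ^ p) (P : {content set Omega -> \bar R}) (Vc c) <=
      \sum_(c < 6 ^ p) ((6^-1 : R) ^+ (0 + p) * (1 - (6^-1) ^+ N) ^+ m)%:E)%E.
    by apply: lee_sum => c _; have [_ _ h] := HV c; exact: h.
  apply: (le_trans hs2).
  rewrite sumEFin lee_fin sumr_const card_ord add0n -[_ *+ (6 ^ p)]mulr_natr mulrC mulrA.
  rewrite [X in X * _](_ : _ = 1) ?mul1r //.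
  by rewrite natrX -exprMn mulfV // expr1n.
Qed.

Lemma bad_negl p : P.-negligible (Bad p).
Proof.
have HW m := bad_bound p m.
pose Wm m := sval (cid (HW m)).
have HWm m := svalP (cid (HW m)).
exists (\bigcap_m Wm m); split.
- by apply: bigcapT_measurable => m; have [] := HWm m.
- have mA : measurable (\bigcap_m Wm m) by apply: bigcapT_measurable => m; have [] := HWm m.
  suff : ((P : {content set Omega -> \bar R}) (\bigcap_m Wm m) <= 0)%E.
    by rewrite measure_le0 => /eqP.
  apply/lee_addgt0Pr => e e0; rewrite add0e.
  have q0 : 0 < (6^-1 : R) ^+ N by apply: exprn_gt0; rewrite invr_gt0.
  have q1 : (6^-1 : R) ^+ N <= 1 by apply: exprn_ile1; [rewrite invr_ge0 | rewrite invf_le1 // ler1n].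
  have [m hm] := pow_lt q0 q1 e0.
  have [mW _ hW] := HWm m.
  apply: le_trans (le_measure _ _ _ _) (le_trans hW _).
  + by rewrite inE.
  + by rewrite inE.
  + by move=> w /(_ m I).
  + by rewrite lee_fin; apply: ltW.
- by move=> w wB m _; have [_ sub _] := HWm m; apply: sub.
Qed.

End Prob.

Lemma char_range (R : realType) (t : triangle R) : 0 <= (char_point t).1 <= 2^-1.
Proof.
rewrite /char_point; case: xgetP => [xy _ H|_] /=.
  by case: t H => [[a b] c] [H _].
by apply/andP; split => //; rewrite invr_ge0.
Qed.

Lemma ball_R (R : realType) (y z e : R) : ball y e z <-> `|y - z| < e.
Proof. by rewrite -ball_normE. Qed.

Theorem theorem3 (R : realType) (d : measure_display) (Omega : measurableType d)
    (P : probability Omega R) (xi : nat -> Omega -> nat) (T0 : triangle R) :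
  tri_ok T0 ->
  (forall n k, measurable [set w | xi n w = k]) ->
  (forall (n : nat) (k : nat -> nat), (forall i, (i <= n)%N -> (k i < 6)%N) ->
     P [set w | forall i, (i <= n)%N -> xi i w = k i] = ((6^-1 : R) ^+ n.+1)%:E) ->
  {ae P, forall w,
     let X := fun n => (char_point (tri_chain T0 (fun m => xi m w) n)).1 in
     \bigcap_(p in [set: nat]) closure [set X n | n in [set n | (p <= n)%N]]
       = `[0, 2^-1]%classic}.
Proof.
move=> ok0 mxi Pcyl.
pose F (i j p : nat) : set Omega := match (unpickle i : option rat) with
  | Some q => if (0 < (ratr q : R)) && ((ratr q : R) < 1/2)
              then Bad xi T0 (ratr q) (j.+1%:R^-1) p else set0
  | None => set0 end.
have negF i j p : P.-negligible (F i j p).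
  rewrite /F; case: (unpickle i) => [q|]; last exact: negligible_set0.
  case: ifP => [/andP[h1 h2]|_]; last exact: negligible_set0.
  have e0 : 0 < (j.+1%:R : R)^-1 by rewrite invr_gt0.
  have [N hN] := reach h1 h2 e0.
  move: (bad_negl ok0 mxi Pcyl hN p) => h; exact: h.
have negU : P.-negligible (\bigcup_i \bigcup_j \bigcup_p F i j p).
  apply: negligible_bigcup => i; apply: negligible_bigcup => j.
  by apply: negligible_bigcup => p; exact: negF.
apply: (negligibleS _ negU) => w /=; apply: contra_notP => H.
have G i j p : ~ F i j p w.
  by move=> h; apply: H; exists i => //; exists j => //; exists p.
pose X := fun n => (char_point (tri_chain T0 (fun m => xi m w) n)).1.
change (\bigcap_(p in [set: nat]) closure [set X n | n in [set n | (p <= n)%N]] = `[0, 2^-1]%classic).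
apply/seteqP; split.
  move=> y /(_ 0%N I) Hy; rewrite /= in_itv /=; apply/andP; split.
    rewrite leNgt; apply/negP => hy.
    have nb : nbhs y (ball y (- y)) by apply/nbhs_ballP; exists (- y) => //=; lra.
    have [z [[n _ <-] /ball_R hz]] := Hy _ nb.
    have := char_range (tri_chain T0 (fun m => xi m w) n).
    rewrite -/(X n) => /andP[h1 h2].
    move: hz; rewrite ltr_norml => /andP[? _]; lra.
  rewrite leNgt; apply/negP => hy.
  have nb : nbhs y (ball y (y - 2^-1)) by apply/nbhs_ballP; exists (y - 2^-1) => //=; lra.
  have [z [[n _ <-] /ball_R hz]] := Hy _ nb.
  have := char_range (tri_chain T0 (fun m => xi m w) n).
  rewrite -/(X n) => /andP[h1 h2].
  move: hz; rewrite ltr_norml => /andP[_ ?]; lra.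
move=> y hy p _; move: hy; rewrite /= in_itv /= => /andP[y0 y1].
move=> B /nbhs_ballP [del /= del0 hB].
have hlo : Num.max 0 (y - del / 2) < Num.min (2^-1) (y + del / 2).
  rewrite gt_max !lt_min; apply/andP; split; apply/andP; split; lra.
have [q] := rat_in_itvoo hlo.
rewrite in_itv /= gt_max lt_min => /andP[/andP[q0 q1] /andP[q2 q3]].
have b0 : 0 <= 2 / del by apply: divr_ge0 => //; apply: ltW.
have hb := archi_boundP b0; set j := Num.Def.archi_bound _ in hb.
have ej : (j.+1%:R : R)^-1 < del / 2.
  rewrite -[X in _ < X]invf_div ltf_pV2 ?posrE ?divr_gt0 //.
  by apply: lt_le_trans hb _; rewrite ler_nat.
have := G (pickle q) j p; rewrite /F pickleK q0 /= (_ : ratr q < 1/2 :> R); last by rewrite div1r.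
move=> /= nB.
have [n [pn hn]] : exists n, (p <= n)%N /\ `|X n - ratr q| < (j.+1%:R)^-1.
  apply: contrapT => nH; apply: nB => n pn; rewrite leNgt; apply/negP => h.
  by apply: nH; exists n.
exists (X n); split; first by exists n.
apply: hB; apply/ball_R.
have -> : y - X n = (y - ratr q) + (ratr q - X n) by ring.
apply: le_lt_trans (ler_normD _ _) _.
rewrite distrC in hn.
have : `|y - ratr q| < del / 2 by rewrite ltr_norml; apply/andP; split; lra.
move: ej hn; move: (j.+1%:R^-1 : R) => e ej hn h; lra.
Qed.
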